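(* For every composition $p=(p_1,\ldots,p_\ell)$ of positive integers, let $B_p 1=B_{p_1}B_{p_2}\cdots B_{p_\ell}\,1$. Then $$B_p1\Big|_{q\to 1+q}\;=\;\sum_{\mu\vdash |p|} P_\mu(q)\,e_\mu[X]$$ for some polynomials $P_\mu(q)$ with nonnegative integer coefficients. Here $|p|=p_1+\cdots+p_\ell$.
   Context: For an integer $a\ge1$, the modified Hall–Littlewood operator $B_a$ acts on symmetric functions $F[X]$ (with coefficients in $\mathbb{Q}[q]$) by $$B_aF[X]=F\Big[X+\epsilon\frac{1-q}{z}\Big]\sum_{r\ge0}z^re_r[X]\Big|_{z^a},$$ where $|_{z^a}$ denotes taking the coefficient of $z^a$. The brackets denote plethystic substitution, and $\epsilon$ is the plethystic variable with $p_k[\epsilon]=(-1)^k$. Thus $p_k[X+\epsilon\frac{1-q}{z}]=p_k[X]+(-1)^k\frac{1-q^k}{z^k}$. Equivalently, $$B_a=\sum_{r,s\ge0}(-1)^sq^r\,e_{a+r+s}\,e_r^\perp h_s^\perp,$$ where $e_{a+r+s}$ acts by multiplication and $f^\perp$ is the adjoint of multiplication by $f$ under the Hall scalar product. The notation $|_{q\to 1+q}$ means substituting $1+q$ for $q$. *)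

(* Defs.v *)
From HB Require Import structures.
From mathcomp Require Import all_boot all_order all_algebra.
From mathcomp Require Import mpoly.
Set Implicit Arguments. Unset Strict Implicit. Unset Printing Implicit Defensive.
Import Order.TTheory GRing.Theory Num.Theory.
Local Open Scope ring_scope.

(* Model of (the degree <= N part of) the ring of symmetric functions Lambda
   with coefficients in Q[q]:  Lambda_Q[q] = Q[q][p_1, p_2, ...] (power sums
   are algebraically independent generators).  We keep p_1..p_N, variable
   'X_i standing for p_(i+1); p_k for k > N is set to 0.  All computations in
   the theorem stay in degree <= N = |p|, where this truncation is an
   isomorphism. *)
Definition Rq := {poly rat}.
Definition Sym (N : nat) := {mpoly Rq[N]}.

Definition psum (N k : nat) : Sym N :=
  if k is k'.+1 then
    (if insub k' is Some i then 'X_i else 0)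
  else 1.

(* elementary symmetric functions via Newton's identities:
   r e_r = sum_{i=1}^r (-1)^(i-1) e_(r-i) p_i,   e_0 = 1.
   elist N r = [:: e_0; ...; e_r]. *)
Fixpoint elist (N r : nat) : seq (Sym N) :=
  match r with
  | 0 => [:: 1]
  | r'.+1 =>
      let l := elist N r' in
      rcons l ((((r'.+1)%:R : rat)^-1)%:P *:
        \sum_(i < r'.+1) ((-1) ^+ i * nth 0 l (r' - i) * psum N i.+1))
  end.

Definition esym (N r : nat) : Sym N := nth 0 (elist N r) r.

Definition emon (N : nat) (mu : seq nat) : Sym N := \prod_(k <- mu) esym N k.

(* The plethystic substitution F |-> F[X + eps (1-q)/w], with w = 1/z, as a
   polynomial in w with coefficients in Sym N:
   p_k |-> p_k + (-1)^k (1 - q^k) w^k. *)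
Definition pleth_shift (N : nat) (F : Sym N) : {poly Sym N} :=
  mmap (fun c : Rq => (c%:MP : Sym N)%:P)
       (fun i : 'I_N =>
          ('X_i : Sym N)%:P
          + ((((-1) ^+ i.+1 * (1 - 'X ^+ i.+1)) : Rq)%:MP : Sym N) *: 'X ^+ i.+1)
       F.

(* B_a F = F[X + eps (1-q)/z] * sum_r z^r e_r[X] |_{z^a}
         = sum_j (coeff of z^(-j) in F[...]) * e_(a+j). *)
Definition Bop (N a : nat) (F : Sym N) : Sym N :=
  let G := pleth_shift F in
  \sum_(j < size G) G`_j * esym N (a + j).

Definition Bcomp (N : nat) (p : seq nat) : Sym N := foldr (@Bop N) 1 p.

Definition shift_q (N : nat) (F : Sym N) : Sym N :=
  map_mpoly (fun c : Rq => c \Po ('X + 1)) F.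

Definition is_partition (n : nat) (mu : seq nat) : bool :=
  [&& sumn mu == n, sorted (fun a b : nat => (b <= a)%N) mu & all (fun x : nat => (0 < x)%N) mu].

Definition nonneg_poly (P : {poly int}) : Prop := forall i, 0 <= P`_i.

(* Main.v *)
Require Import Defs.
From HB Require Import structures.
From mathcomp Require Import all_boot all_order all_algebra.
From mathcomp Require Import mpoly.
From mathcomp Require Import ring zify.
Import Order.TTheory GRing.Theory Num.Theory.
Local Open Scope ring_scope.

Definition dd (j : nat) : Rq := (-1) ^+ j * (1 - 'X ^+ j).
Definition cc (m : nat) : Rq := if m is m'.+1 then ('X - 1) * 'X ^+ m' else 1.

Lemma sdd i : (-1) ^+ i * dd i.+1 = 'X ^+ i.+1 - 1.
Proof.
have s2 : (-1)^+i * (-1)^+i = 1 :> Rq by rewrite -exprD -signr_odd addnn odd_double.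
by rewrite /dd exprS mulN1r mulNr mulrN mulrA s2 mul1r opprB.
Qed.

Lemma cc_newton j : j%:R * cc j = \sum_(i < j) ((-1) ^+ i * dd i.+1) * cc (j.-1 - i).
Proof.
case: j => [|j]; first by rewrite big_ord0 mul0r.
rewrite big_ord_recr /= subnn sdd mulr1.
have -> : \sum_(i < j) ((-1) ^+ i * dd i.+1 * cc (j - i)) =
   \sum_(i < j) (('X - 1) * ('X ^+ j - 'X ^+ (j.-1 - i))).
  apply: eq_bigr => i _; rewrite sdd.
  have -> : (j - i = (j.-1 - i).+1)%N by have := ltn_ord i; lia.
  rewrite /= mulrCA; congr (_ * _).
  rewrite mulrBl mul1r -exprD.
  by have -> : (i.+1 + (j.-1 - i) = j)%N by have := ltn_ord i; lia.
rewrite -mulr_sumr sumrB sumr_const card_ord.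
have := subrXX ('X : Rq) 1 j; rewrite expr1n.
under eq_bigr do rewrite expr1n mulr1.
move=> H; rewrite mulrBr -H exprS; ring.
Qed.

Definition shq : Rq -> Rq := fun c => c \Po ('X + 1).
HB.instance Definition _ := GRing.Additive.copy shq (comp_poly ('X + 1)).
HB.instance Definition _ := GRing.isMultiplicative.Build Rq Rq shq (comp_poly_multiplicative _).

Definition cone (c : Rq) := exists P : {poly int}, nonneg_poly P /\ shq c = map_poly intr P.

Lemma nonneg_mul P Q : nonneg_poly P -> nonneg_poly Q -> nonneg_poly (P * Q).
Proof.
move=> hP hQ i; rewrite coefM; apply: sumr_ge0 => j _; exact: mulr_ge0.
Qed.

Lemma cone1 : cone 1.
Proof. exists 1; split; last by rewrite rmorph1 rmorph1. by move=> i; rewrite coef1; case: (i == 0%N). Qed.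

Lemma cone_mul a b : cone a -> cone b -> cone (a * b).
Proof.
move=> [P [hP eP]] [Q [hQ eQ]]; exists (P * Q); split; first exact: nonneg_mul.
have -> : shq (a * b) = shq a * shq b := rmorphM shq a b.
by rewrite eP eQ; symmetry; exact: rmorphM.
Qed.

Lemma cone_exp a n : cone a -> cone (a ^+ n).
Proof. move=> ha; elim: n => [|n IH]; first exact: cone1. by rewrite exprS; apply: cone_mul. Qed.

Lemma coneX : cone 'X.
Proof.
exists ('X + 1); split.
  by move=> i; rewrite coefD coefX coef1; case: (i == 1%N); case: (i == 0%N).
by rewrite /shq comp_polyX rmorphD /= map_polyX rmorph1.
Qed.

Lemma coneXm1 : cone ('X - 1).
Proof.
exists 'X; split.
  by move=> i; rewrite coefX; case: (i == 1%N).
by rewrite /shq comp_polyB comp_polyX comp_polyC map_polyX addrK.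
Qed.

Lemma cone_cc m : cone (cc m).
Proof. case: m => [|m] /=; [exact: cone1 | apply: cone_mul; [exact: coneXm1 | exact: cone_exp coneX]]. Qed.

Section S.
Variable N : nat.
Definition fC : Rq -> {poly Sym N} := fun c => (c%:MP)%:P.
HB.instance Definition _ := GRing.RMorphism.copy fC (polyC \o @mpolyC N Rq).
Definition hsh (i : 'I_N) : {poly Sym N} :=
          ('X_i : Sym N)%:P
          + ((((-1) ^+ i.+1 * (1 - 'X ^+ i.+1)) : Rq)%:MP : Sym N) *: 'X ^+ i.+1.
Definition PS : {rmorphism Sym N -> {poly Sym N}} := mmap fC hsh.
Lemma pleth_shiftE (F : Sym N) : pleth_shift F = PS F.
Proof. by []. Qed.

Lemma size_elist r : size (elist N r) = r.+1.
Proof. by elim: r => //= r IH; rewrite size_rcons IH. Qed.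

Lemma nth_elist r j : (j <= r)%N -> nth 0 (elist N r) j = Defs.esym N j.
Proof.
elim: r j => [|r IH] j hj; first by case: j hj.
rewrite [elist N r.+1]/= nth_rcons size_elist.
case: (ltnP j r.+1) => hjr; first exact: IH.
have -> : j = r.+1 by apply/eqP; rewrite eqn_leq hj hjr.
by rewrite eqxx /Defs.esym /= nth_rcons size_elist ltnn eqxx.
Qed.

Lemma esym0 : Defs.esym N 0 = 1.
Proof. by []. Qed.

Lemma esymS k : Defs.esym N k.+1 = (((k.+1)%:R : rat)^-1)%:P *:
   \sum_(i < k.+1) ((-1) ^+ i * Defs.esym N (k - i) * psum N i.+1).
Proof.
rewrite {1}/Defs.esym /= nth_rcons size_elist ltnn eqxx; congr (_ *: _).
by apply: eq_bigr => i _; rewrite nth_elist // leq_subr.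
Qed.


Lemma PS_psum i : (i < N)%N ->
  PS (psum N i.+1) = (psum N i.+1)%:P + (dd i.+1)%:MP *: 'X ^+ i.+1.
Proof.
move=> hi; rewrite /psum insubT /=.
by rewrite /PS /= mmapX mmap1U.
Qed.


Lemma sum_cut (R : nmodType) n m (F : nat -> R) : (m <= n)%N ->
  \sum_(i < n) (if (i < m)%N then F i else 0) = \sum_(i < m) F i.
Proof. by move=> hmn; rewrite (big_ord_widen n F hmn) [RHS]big_mkcond. Qed.

Notation E := (Defs.esym N).

Definition ff k : {poly Sym N} := \poly_(m < k.+1) (E (k - m) * (cc m)%:MP).

Lemma newt m : (m.+1)%:R * E m.+1 =
   \sum_(i < m.+1) ((-1) ^+ i * E (m - i) * psum N i.+1).
Proof.
rewrite esymS -mul_mpolyC mulrA -mpolyC_nat -mpolyCM -polyC_natr -polyCM mulfV.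
  by rewrite mpolyC1 mul1r.
by rewrite pnatr_eq0.
Qed.

Lemma sgnP i : ((-1) ^+ i : {poly Sym N}) = ((-1) ^+ i)%:P.
Proof. by rewrite rmorphXn rmorphN1. Qed.

Lemma ccN j : (j%:R * cc j)%:MP = \sum_(i < j) ((-1) ^+ i * (dd i.+1)%:MP) * (cc (j.-1 - i))%:MP :> Sym N.
Proof.
rewrite cc_newton rmorph_sum; apply: eq_bigr => i _.
by rewrite !rmorphM rmorphXn rmorphN1.
Qed.

Lemma key k : (k < N)%N ->
  (forall i, (i <= k)%N -> PS (E i) = ff i) ->
  (k.+1)%:R * ff k.+1 =
  \sum_(i < k.+1) ((-1) ^+ i * ff (k - i) * PS (psum N i.+1)).
Proof.
move=> hk IH; apply/polyP => j.
rewrite coef_sum mulr_natl coefMn coef_poly.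
under eq_bigr => i _.
  rewrite PS_psum; last by have := ltn_ord i; lia.
  rewrite sgnP -mul_polyC mulrDr coefD.
  rewrite coefMC coefCM [_ * (_ * 'X^_)]mulrA coefMXn coefMC coefCM !coef_poly.
  over.
case: (ltnP j k.+2) => hj; last first.
  rewrite mul0rn big1 // => i _.
  have h1 : (j < (k - i).+1)%N = false by apply/negbTE; rewrite -leqNgt; lia.
  have h2 : (j - i.+1 < (k - i).+1)%N = false by apply/negbTE; rewrite -leqNgt; have := ltn_ord i; lia.
  by rewrite h1 h2 !(mulr0, mul0r) add0r; case: ifP.
rewrite big_split /=.
have -> : \sum_(i < k.+1) ((-1) ^+ i *
     (if (j < (k - i).+1)%N then E (k - i - j) * (cc j)%:MP_[N] else 0) *
     psum N i.+1) = \sum_(i < k.+1) (if (i < k.+1 - j)%N then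
       (cc j)%:MP * ((-1) ^+ i * E (k - j - i) * psum N i.+1) else 0).
  apply: eq_bigr => i _; have hi := ltn_ord i; case: ifP => h1; last (move/negbT: h1; rewrite -leqNgt => h1).
    have -> : (i < k.+1 - j)%N by lia.
    have -> : (k - i - j = k - j - i)%N by lia.
    ring.
  have -> : (i < k.+1 - j)%N = false by apply/negbTE; rewrite -leqNgt; lia.
  by rewrite mulr0 mul0r.
rewrite (@sum_cut _ _ _ (fun i => (cc j)%:MP * ((-1) ^+ i * E (k - j - i) * psum N i.+1))) ?leq_subr // -mulr_sumr.
have -> : \sum_(i < k.+1) (if (j < i.+1)%N then 0 else
     (-1) ^+ i * (if (j - i.+1 < (k - i).+1)%N
        then E (k - i - (j - i.+1)) * (cc (j - i.+1))%:MP_[N] else 0) *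
       (dd i.+1)%:MP_[N]) = \sum_(i < k.+1) (if (i < j)%N then
       E (k.+1 - j) * (((-1) ^+ i * (dd i.+1)%:MP) * (cc (j.-1 - i))%:MP) else 0).
  apply: eq_bigr => i _; have hi := ltn_ord i; case: ifP => h1; last (move/negbT: h1; rewrite -leqNgt => h1).
    have -> : (i < j)%N = false by apply/negbTE; rewrite -leqNgt; lia.
    by [].
  have -> : (i < j)%N by lia.
  have -> : (j - i.+1 < (k - i).+1)%N by lia.
  have -> : (k - i - (j - i.+1) = k.+1 - j)%N by lia.
  have -> : (j - i.+1 = j.-1 - i)%N by lia.
  ring.
rewrite (@sum_cut _ _ _ (fun i => E (k.+1 - j) * (((-1) ^+ i * (dd i.+1)%:MP) * (cc (j.-1 - i))%:MP))); last by lia.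
rewrite -mulr_sumr -ccN rmorphM rmorph_nat.
have -> : \sum_(i < k.+1 - j) ((-1) ^+ i * E (k - j - i) * psum N i.+1)
   = (k.+1 - j)%:R * E (k.+1 - j).
  case: (leqP j k) => hjk.
    have -> : (k.+1 - j = (k - j).+1)%N by lia.
    by rewrite newt.
  have -> : (k.+1 - j = 0)%N by lia.
  by rewrite big_ord0 mul0r.
have hn : ((k.+1)%:R : Sym N) = (k.+1 - j)%:R + j%:R.
  by rewrite -natrD; congr (_%:R); lia.
rewrite -[_ *+ k.+1]mulr_natl hn; ring.
Qed.
Lemma PS_esym k : (k <= N)%N -> PS (E k) = ff k.
Proof.
elim/ltn_ind: k => k IH hk.
case: k IH hk => [|k] IH hk.
  rewrite esym0 rmorph1; apply/polyP => j; rewrite coef_poly coef1.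
  by case: j => [|j] //=; rewrite subnn esym0 /cc mpolyC1 mulr1.
have IH' : forall i, (i <= k)%N -> PS (E i) = ff i.
  move=> i hi; apply: IH; first exact: leq_ltn_trans hi (ltnSn k).
  exact: leq_trans hi (ltnW hk).
pose u := fC (((k.+1)%:R : rat)^-1)%:P.
have hu : u * (k.+1)%:R = 1.
  have -> : ((k.+1)%:R : {poly Sym N}) = fC ((k.+1)%:R) by rewrite rmorph_nat.
  rewrite /u -rmorphM.
  have -> : (((k.+1)%:R : rat)^-1)%:P * (k.+1)%:R = 1 :> Rq.
    by rewrite -polyC_natr -polyCM mulVf ?pnatr_eq0.
  exact: rmorph1.
rewrite -[PS (E k.+1)]mul1r -hu -mulrA.
have -> : ((k.+1)%:R : {poly Sym N}) * PS (E k.+1) = PS ((k.+1)%:R * E k.+1).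
  by rewrite rmorphM rmorph_nat.
rewrite newt rmorph_sum.
under eq_bigr => i _ do rewrite !rmorphM rmorphXn rmorphN1 (IH' _ (leq_subr _ _)).
by rewrite -key // mulrA hu mul1r.
Qed.

Definition Good (n : nat) (F : Sym N) := exists s : seq (seq nat * Rq),
  (forall x, x \in s -> sumn x.1 = n /\ cone x.2) /\
  F = \sum_(x <- s) x.2 *: emon N x.1.

Lemma Good0 n : Good n 0.
Proof. by exists [::]; split => //; rewrite big_nil. Qed.

Lemma GoodD n F G : Good n F -> Good n G -> Good n (F + G).
Proof.
move=> [s1 [h1 e1]] [s2 [h2 e2]]; exists (s1 ++ s2); split.
  by move=> x; rewrite mem_cat => /orP [/h1|/h2].
by rewrite big_cat e1 e2.
Qed.

Lemma Good_sum n (I : eqType) (r : seq I) (G : I -> Sym N) :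
  (forall i, i \in r -> Good n (G i)) -> Good n (\sum_(i <- r) G i).
Proof.
elim: r => [|i r IH] h; first by rewrite big_nil; exact: Good0.
rewrite big_cons; apply: GoodD; first by apply: h; rewrite inE eqxx.
by apply: IH => j hj; apply: h; rewrite inE hj orbT.
Qed.

Lemma Good1 n c nu : cone c -> sumn nu = n -> Good n (c *: emon N nu).
Proof.
move=> hc hs; exists [:: (nu, c)]; split; last by rewrite big_seq1.
by move=> x; rewrite inE => /eqP ->.
Qed.

Definition Phi a M (H : {poly Sym N}) := \sum_(j < M) H`_j * E (a + j).

Lemma Phi_sum a M (I : Type) (r : seq I) (H : I -> {poly Sym N}) :
  Phi a M (\sum_(i <- r) H i) = \sum_(i <- r) Phi a M (H i).
Proof.
rewrite /Phi; under eq_bigr do rewrite coef_sum mulr_suml.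
exact: exchange_big.
Qed.

Lemma sum_delta M t (G : nat -> Sym N) :
  \sum_(j < M) ((j == t :> nat)%:R * G j) = if (t < M)%N then G t else 0.
Proof.
case: ifP => ht.
  rewrite (bigD1 (Ordinal ht)) //= eqxx mul1r big1 ?addr0 // => i hi.
  have -> : (i == t :> nat) = false.
    apply/negbTE; apply: contra hi => /eqP e; apply/eqP/val_inj => /=; exact: e.
  by rewrite mul0r.
rewrite big1 // => i _.
have -> : (i == t :> nat) = false.
  by apply/negbTE; apply/eqP => e; move: (ltn_ord i); rewrite e ht.
by rewrite mul0r.
Qed.

Lemma distr3 (R : pzRingType) n (A P : R) (F : 'I_n -> R) :
  A * ((\sum_(i < n) F i) * P) = \sum_(i < n) (A * F i * P).
Proof. by rewrite mulr_suml mulr_sumr; apply: eq_bigr => i _; rewrite mulrA. Qed.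

Lemma GoodPhi a M mu : forall nu t c, cone c ->
  Good (sumn nu + t + sumn mu + a)
    (Phi a M ((c%:MP * emon N nu)%:P * 'X^t * \prod_(k <- mu) ff k)).
Proof.
elim: mu => [|k mu IH] nu t c hc.
  rewrite big_nil mulr1 /Phi.
  under eq_bigr => j _ do rewrite coefCM coefXn -mulrA mulrCA.
  rewrite (sum_delta M t (fun j => (c%:MP * emon N nu) * E (a + j))).
  case: ifP => _; last exact: Good0.
  have -> : c%:MP * emon N nu * E (a + t) = c *: emon N ((a + t)%N :: nu).
    by rewrite /emon big_cons -mul_mpolyC; ring.
  apply: Good1 => //; rewrite /= addn0; lia.
rewrite big_cons {1}/ff poly_def distr3 Phi_sum.
apply: Good_sum => m _.
have e : (c%:MP * emon N nu)%:P * 'X^t * ((E (k - m) * (cc m)%:MP) *: 'X^m) =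
   ((c * cc m)%:MP * emon N ((k - m)%N :: nu))%:P * 'X^(t + m)%N.
  by rewrite -mul_polyC /emon big_cons exprD rmorphM !polyCM; ring.
rewrite e.
have -> : (sumn nu + t + sumn (k :: mu) + a =
           sumn ((k - m)%N :: nu) + (t + m) + sumn mu + a)%N.
  by rewrite /=; have := ltn_ord m; lia.
exact: (IH _ _ _ (cone_mul _ _ hc (cone_cc m))).
Qed.

Lemma mem_sumn k mu : k \in mu -> (k <= sumn mu)%N.
Proof.
elim: mu => //= x l IH; rewrite inE => /orP [/eqP ->|/IH h]; first exact: leq_addr.
exact: leq_trans h (leq_addl _ _).
Qed.

Lemma BopE a F : @Bop N a F = Phi a (size (PS F)) (PS F).
Proof. by []. Qed.

Lemma PS_C c : PS c%:MP = (c%:MP)%:P.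
Proof. exact: mmapC. Qed.

Lemma BopGood a n F : Good n F -> (n <= N)%N -> Good (n + a) (@Bop N a F).
Proof.
move=> [s [hs ->]] hn; rewrite BopE; move: (size _) => M.
rewrite rmorph_sum Phi_sum; apply: Good_sum => x hx.
have [hx1 hx2] := hs x hx.
rewrite -mul_mpolyC rmorphM PS_C /emon rmorph_prod.
have -> : \prod_(k <- x.1) PS (E k) = \prod_(k <- x.1) ff k.
  rewrite big_seq [RHS]big_seq; apply: eq_bigr => k hk; apply: PS_esym.
  by apply: leq_trans (mem_sumn _ _ hk) _; rewrite hx1.
have -> : (x.2%:MP)%:P = (x.2%:MP * emon N [::])%:P * 'X^0 :> {poly Sym N}.
  by rewrite /emon big_nil !mulr1.
have := GoodPhi a M x.1 [::] 0 x.2 hx2; rewrite hx1 /=.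
by rewrite add0n.
Qed.

Lemma BcompGood p : (sumn p <= N)%N -> Good (sumn p) (Bcomp N p).
Proof.
elim: p => [|a p IH] /= h.
  exists [:: ([::], 1)]; split.
    by move=> x; rewrite inE => /eqP ->; split => //; exact: cone1.
  by rewrite big_seq1 /emon big_nil scale1r.
rewrite addnC; apply: BopGood; last by apply: leq_trans h; exact: leq_addl.
by apply: IH; apply: leq_trans h; exact: leq_addl.
Qed.

End S.

Lemma sE N (F : Sym N) : shift_q F = map_mpoly shq F.
Proof. by []. Qed.

Lemma shq_E N k : map_mpoly shq (Defs.esym N k) = Defs.esym N k.
Proof.
elim/ltn_ind: k => k IH; case: k IH => [|k] IH; first exact: rmorph1.
rewrite esymS map_mpolyZ rmorph_sum; congr (_ *: _); first exact: comp_polyC.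
apply: eq_bigr => i _; rewrite !rmorphM rmorphXn rmorphN1; congr (_ * _ * _).
  by apply: IH; exact: leq_ltn_trans (leq_subr _ _) (ltnSn _).
rewrite /psum; case: insub => [j|]; [exact: map_mpolyX | exact: rmorph0].
Qed.

Lemma shq_emon N mu : map_mpoly shq (emon N mu) = emon N mu.
Proof. by rewrite /emon rmorph_prod; apply: eq_bigr => k _; exact: shq_E. Qed.

Definition geqr := fun a b : nat => (b <= a)%N.
Definition nz (mu : seq nat) := sort geqr (filter (fun x : nat => (0 < x)%N) mu).

Lemma emon_nz N mu : emon N (nz mu) = emon N mu.
Proof.
rewrite /emon /nz (perm_big _ (permEl (perm_sort _ _))) big_filter.
rewrite big_mkcond; apply: eq_bigr => k _; by case: k.
Qed.

Lemma sumn_filter mu : sumn (filter (fun x : nat => (0 < x)%N) mu) = sumn mu.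
Proof. by elim: mu => //= x l IH; case: x => //= x; rewrite IH. Qed.

Lemma part_nz n mu : sumn mu = n -> is_partition n (nz mu).
Proof.
move=> h; rewrite /is_partition /nz.
rewrite (perm_sumn (permEl (perm_sort _ _))) sumn_filter h eqxx /=.
rewrite all_sort filter_all andbT; apply: sort_sorted.
by move=> a b; rewrite /geqr leq_total.
Qed.

Lemma mD N (F G : Sym N) : map_mpoly shq (F + G) = map_mpoly shq F + map_mpoly shq G.
Proof. exact: rmorphD. Qed.
Lemma mZ N c (G : Sym N) : map_mpoly shq (c *: G) = shq c *: map_mpoly shq G.
Proof. exact: map_mpolyZ. Qed.

Lemma conv N n (s : seq (seq nat * Rq)) :
  (forall x, x \in s -> sumn x.1 = n /\ cone x.2) ->
  exists s' : seq (seq nat * {poly int}),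
    all (fun x => is_partition n x.1) s' /\
    (forall x, x \in s' -> nonneg_poly x.2) /\
    shift_q (\sum_(x <- s) x.2 *: emon N x.1) =
      \sum_(x <- s') (map_poly intr x.2 : Rq) *: emon N x.1.
Proof.
elim: s => [|x s IH] hs.
  by exists [::]; split => //; split => //; rewrite !big_nil sE raddf0.
have [hx1 [P [hP eP]]] := hs x (mem_head _ _).
have [s' [h1 [h2 h3]]] : exists s' : seq (seq nat * {poly int}),
    all (fun x => is_partition n x.1) s' /\
    (forall x, x \in s' -> nonneg_poly x.2) /\
    shift_q (\sum_(x <- s) x.2 *: emon N x.1) =
      \sum_(x <- s') (map_poly intr x.2 : Rq) *: emon N x.1.
  by apply: IH => y hy; apply: hs; rewrite in_cons hy orbT.
exists ((nz x.1, P) :: s'); split; first by rewrite /= h1 andbT part_nz.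
split; first by move=> y; rewrite in_cons => /orP [/eqP -> | /h2].
rewrite big_cons sE mD mZ shq_emon -sE h3 big_cons emon_nz /=.
by rewrite -eP.
Qed.

Theorem theorem2p1 (p : seq nat) (hp : all (fun a : nat => (0 < a)%N) p) :
  exists s : seq (seq nat * {poly int}),
    all (fun x => is_partition (sumn p) x.1) s /\
    (forall x, x \in s -> nonneg_poly x.2) /\
    shift_q (Bcomp (sumn p) p) =
      \sum_(x <- s) (map_poly intr x.2 : Rq) *: emon (sumn p) x.1.
Proof.
have [s [hs ->]] := BcompGood (sumn p) p (leqnn _).
exact: conv hs.
Qed.
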